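(* For every $d\ge2$, $B_{d,3}(1,1)=3$.
   Context: $T_{d,3}=\bigoplus_{\ell=0}^3(\mathbb{R}^d)^{\otimes\ell}$ is the truncated tensor algebra with product the bilinear extension of the tensor product of levels, set to $0$ when the total level exceeds $3$. $\mathfrak{g}_{d,3}$ is the smallest Lie subalgebra (commutator bracket) containing $e_1,\dots,e_d$; $\exp(\mathbf{z})=\sum_{\ell=0}^3\mathbf{z}^{\otimes\ell}/\ell!$; $\mathcal{G}_{d,3}=\exp(\mathfrak{g}_{d,3})$ (a group), $\log=\exp^{-1}$. For $\mathbf{x}\in\mathcal{G}_{d,3}^N$, $\mathsf{bary}(\mathbf{x})$ is the unique $\mathbf{m}$ with $\sum_i\log(\mathbf{m}^{-1}\mathbf{x}_i)=0$. For a path $X:[0,1]\to\mathbb{R}^d$ its $3$-truncated signature $\sigma(X)\in\mathcal{G}_{d,3}$ has $\sigma^{(0)}=1$ and $\sigma^{(\ell)}_{w_1\dots w_\ell}=\int_{0<t_1<\dots<t_\ell<1}\dot X_{w_1}(t_1)\cdots\dot X_{w_\ell}(t_\ell)\,dt$. $\mathcal{L}^{\mathrm{im}}_{d,\le 3,m}$ is the set of $\sigma(X)$ for piecewise linear $X:[0,1]\to\mathbb{R}^d$ with $m$ segments, and $B_{d,3}(\alpha)=\min\{m\in\mathbb{N}:\mathsf{bary}(\mathcal{L}^{\mathrm{im}}_{d,\le 3,\alpha_1}\times\dots\times\mathcal{L}^{\mathrm{im}}_{d,\le 3,\alpha_N})\subseteq\mathcal{L}^{\mathrm{im}}_{d,\le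 3,m}\}$. *)

(* Defs.v *)
From Stdlib Require Import Reals List.
From Coquelicot Require Import Coquelicot.
From mathcomp Require Import ssreflect ssrbool eqtype ssrnat fintype.

Set Implicit Arguments.
Unset Strict Implicit.

Local Open Scope R_scope.

(** Truncated tensor algebra T_{d,3} = R + R^d + (R^d)^{(x)2} + (R^d)^{(x)3},
    coordinates indexed by words over 'I_d. *)
Record T3 (d : nat) := mkT3 {
  t0 : R;
  t1 : 'I_d -> R;
  t2 : 'I_d -> 'I_d -> R;
  t3 : 'I_d -> 'I_d -> 'I_d -> R }.

Arguments mkT3 {d}.

Definition tzero (d : nat) : T3 d :=
  mkT3 0 (fun _ => 0) (fun _ _ => 0) (fun _ _ _ => 0).

Definition tone (d : nat) : T3 d :=
  mkT3 1 (fun _ => 0) (fun _ _ => 0) (fun _ _ _ => 0).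

Definition tadd d (x y : T3 d) : T3 d :=
  mkT3 (t0 x + t0 y) (fun a => t1 x a + t1 y a)
       (fun a b => t2 x a b + t2 y a b)
       (fun a b c => t3 x a b c + t3 y a b c).

Definition tscale d (r : R) (x : T3 d) : T3 d :=
  mkT3 (r * t0 x) (fun a => r * t1 x a) (fun a b => r * t2 x a b)
       (fun a b c => r * t3 x a b c).

Definition tmul d (x y : T3 d) : T3 d :=
  mkT3 (t0 x * t0 y)
       (fun a => t0 x * t1 y a + t1 x a * t0 y)
       (fun a b => t0 x * t2 y a b + t1 x a * t1 y b + t2 x a b * t0 y)
       (fun a b c => t0 x * t3 y a b c + t1 x a * t2 y b c
                     + t2 x a b * t1 y c + t3 x a b c * t0 y).

Definition tsub d (x y : T3 d) : T3 d := tadd x (tscale (-1) y).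

Definition tbracket d (x y : T3 d) : T3 d := tsub (tmul x y) (tmul y x).

Definition tbasis d (i : 'I_d) : T3 d :=
  mkT3 0 (fun j => if j == i then 1 else 0) (fun _ _ => 0) (fun _ _ _ => 0).

Definition texp d (z : T3 d) : T3 d :=
  tadd (tone d) (tadd z (tadd (tscale (/2) (tmul z z))
                              (tscale (/6) (tmul z (tmul z z))))).

Inductive in_lie d : T3 d -> Prop :=
  | lie_gen : forall i, in_lie (tbasis i)
  | lie_add : forall x y, in_lie x -> in_lie y -> in_lie (tadd x y)
  | lie_scale : forall r x, in_lie x -> in_lie (tscale r x)
  | lie_bracket : forall x y, in_lie x -> in_lie y -> in_lie (tbracket x y).

Definition in_G d (m : T3 d) : Prop := exists z, in_lie z /\ texp z = m.

Definition tsum d (zs : list (T3 d)) : T3 d := fold_right (@tadd d) (tzero d) zs.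

(** m is a barycenter of x = (x_1,...,x_N):
    m in G and sum_i log(m^{-1} x_i) = 0, where log = exp^{-1} on g,
    i.e. z_i = log(m^{-1} x_i) is the z_i in g with exp(z_i) = m^{-1} x_i,
    equivalently m * exp(z_i) = x_i. *)
Definition is_bary d (x : list (T3 d)) (m : T3 d) : Prop :=
  in_G m /\
  exists zs : list (T3 d),
    Forall2 (fun xi z => in_lie z /\ tmul m (texp z) = xi) x zs /\
    tsum zs = tzero d.

(** Piecewise linear path X : [0,1] -> R^d with m segments
    (breakpoints 0 = s_0 < s_1 < ... < s_m = 1, X affine on each piece).
    X is given as a function on R; only its values on [0,1] matter. *)
Definition piecewise_linear d (m : nat) (X : R -> 'I_d -> R) : Prop :=
  exists s : nat -> R,
    s 0%N = 0 /\ s m = 1 /\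
    (forall k, (k < m)%N -> s k < s k.+1) /\
    (forall k, (k < m)%N -> forall t, s k <= t <= s k.+1 -> forall w,
       X t w = X (s k) w
               + (t - s k) / (s k.+1 - s k) * (X (s k.+1) w - X (s k) w)).

Definition Xdot d (X : R -> 'I_d -> R) (w : 'I_d) (t : R) : R :=
  Derive (fun u => X u w) t.

(** 3-truncated signature, simplex integrals written as iterated integrals *)
Definition sig3 d (X : R -> 'I_d -> R) : T3 d :=
  mkT3 1
    (fun a => RInt (fun t1 => Xdot X a t1) 0 1)
    (fun a b => RInt (fun t2 => RInt (fun t1 => Xdot X a t1) 0 t2
                                * Xdot X b t2) 0 1)
    (fun a b c => RInt (fun t3 =>
                   RInt (fun t2 => RInt (fun t1 => Xdot X a t1) 0 t2
                                   * Xdot X b t2) 0 t3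
                   * Xdot X c t3) 0 1).

Definition Lim d (m : nat) (g : T3 d) : Prop :=
  exists X : R -> 'I_d -> R, piecewise_linear m X /\ sig3 X = g.

Definition bary_incl d (alpha : list nat) (m : nat) : Prop :=
  forall (x : list (T3 d)) (g : T3 d),
    Forall2 (fun a xi => Lim a xi) alpha x ->
    is_bary x g -> Lim m g.

Definition B_eq d (alpha : list nat) (n : nat) : Prop :=
  bary_incl d alpha n /\ forall m, (m < n)%N -> ~ bary_incl d alpha m.

(* Main.v *)
Require Import Defs.
From Stdlib Require Import Reals List.
From mathcomp Require Import ssreflect ssrbool eqtype ssrnat fintype.
From Stdlib Require Import Lra FunctionalExtensionality.
From Coquelicot Require Import Coquelicot.
From mathcomp Require Import ssreflect ssrbool eqtype ssrnat fintype.
Set Implicit Arguments.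
Arguments Rinv : simpl never.
Unset Strict Implicit.
Local Open Scope R_scope.

Lemma T3_ext d (x y : T3 d) : t0 x = t0 y -> (forall a, t1 x a = t1 y a) ->
  (forall a b, t2 x a b = t2 y a b) -> (forall a b c, t3 x a b c = t3 y a b c) -> x = y.
Proof.
case: x => x0 x1 x2 x3; case: y => y0 y1 y2 y3 /= -> H1 H2 H3.
have -> : x1 = y1 by apply: functional_extensionality.
have -> : x2 = y2 by do 2 (apply: functional_extensionality => ?); auto.
have -> : x3 = y3 by do 3 (apply: functional_extensionality => ?); auto.
by [].
Qed.


Definition vec d (v : 'I_d -> R) : T3 d := mkT3 0 v (fun _ _ => 0) (fun _ _ _ => 0).

Lemma expv d (v : 'I_d -> R) : texp (vec v) = mkT3 1 v (fun a b => v a * v b / 2) (fun a b c => v a * v b * v c / 6).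
Proof. apply T3_ext; intros; unfold texp, tone, tmul, tadd, tscale, vec; cbn [t0 t1 t2 t3]; field. Qed.

Ltac rring := rewrite /Rdiv; try (set h2 := / 2); try (set h6 := / 6); ring.

Fixpoint Sg d (v : nat -> 'I_d -> R) (k : nat) : T3 d :=
  match k with 0%N => tone d | k'.+1 => tmul (Sg v k') (texp (vec (v k'))) end.

Lemma Sg0 d (v : nat -> 'I_d -> R) k : t0 (Sg v k) = 1.
Proof. elim: k => [|k IH]; first by [].
change (Sg v k.+1) with (tmul (Sg v k) (texp (vec (v k)))). rewrite expv /= IH. ring. Qed.

Section Chain.
Variables (s : nat -> R) (m : nat).
Hypothesis Hs0 : s 0%N = 0.
Hypothesis Hinc : forall k, (k < m)%N -> s k < s k.+1.

Lemma chain (f : R -> R) (phi dphi : nat -> R -> R) :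
 (forall k, (k < m)%N -> forall x, is_derive (phi k) x (dphi k x)) ->
 (forall k, (k < m)%N -> forall x, continuous (dphi k) x) ->
 (forall k, (k < m)%N -> forall x, s k < x < s k.+1 -> f x = dphi k x) ->
 phi 0%N 0 = 0 -> (forall k, (k.+1 < m)%N -> phi k.+1 (s k.+1) = phi k (s k.+1)) ->
 forall k, (k < m)%N -> forall t, s k <= t <= s k.+1 -> is_RInt f 0 t (phi k t).
Proof.
move=> Hd Hc Hf H0 Hcons.
have seg : forall k, (k < m)%N -> forall t, s k <= t <= s k.+1 ->
    is_RInt f (s k) t (phi k t - phi k (s k)).
  move=> k Hk t Ht.
  apply: (is_RInt_ext (dphi k)).
    move=> x; rewrite Rmin_left ?Rmax_right; try lra.
    move=> Hx; symmetry; apply: Hf => //; lra.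
  apply: (is_RInt_derive (phi k) (dphi k)) => x _; auto.
elim=> [|k IH] Hk t Ht.
  have := seg 0%N Hk t Ht. by rewrite Hs0 H0 Rminus_0_r.
have Hk' : (k < m)%N by apply: ltnW.
have H1 := IH Hk' (s k.+1) (conj (Rlt_le _ _ (Hinc Hk')) (Rle_refl _)).
have H2 := seg k.+1 Hk t Ht.
have := is_RInt_Chasles _ _ _ _ _ _ H1 H2.
rewrite Hcons //. 
have -> : plus (phi k (s k.+1)) (phi k.+1 t - phi k (s k.+1)) = phi k.+1 t.
  rewrite /plus /=. ring.
done.
Qed.
End Chain.

Section PL.
Variables (d : nat) (X : R -> 'I_d -> R) (s : nat -> R) (m : nat).
Hypothesis Hs0 : s 0%N = 0.
Hypothesis Hinc : forall k, (k < m)%N -> s k < s k.+1.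
Hypothesis Haff : forall k, (k < m)%N -> forall t, s k <= t <= s k.+1 -> forall w,
       X t w = X (s k) w + (t - s k) / (s k.+1 - s k) * (X (s k.+1) w - X (s k) w).

Definition vv k w := X (s k.+1) w - X (s k) w.
Definition lam k x := (x - s k) / (s k.+1 - s k).
Definition SS := Sg vv.
Definition R1 k x a := t1 (SS k) a + lam k x * vv k a.
Definition R2 k x a b := t2 (SS k) a b + lam k x * t1 (SS k) a * vv k b
   + lam k x * lam k x / 2 * vv k a * vv k b.
Definition R3 k x a b c := t3 (SS k) a b c + lam k x * t2 (SS k) a b * vv k c
   + lam k x * lam k x / 2 * t1 (SS k) a * vv k b * vv k c
   + lam k x * lam k x * lam k x / 6 * vv k a * vv k b * vv k c.

Lemma Dk k : (k < m)%N -> s k.+1 - s k <> 0.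
Proof. move=> /Hinc; lra. Qed.

Lemma lam1 k : (k < m)%N -> lam k (s k.+1) = 1.
Proof. move=> /Dk H; rewrite /lam; field; auto. Qed.

Lemma lam0 k : lam k (s k) = 0.
Proof. rewrite /lam /Rdiv; ring. Qed.

Lemma SSstep k : (k < m)%N ->
  [/\ forall a, t1 (SS k.+1) a = R1 k (s k.+1) a,
      forall a b, t2 (SS k.+1) a b = R2 k (s k.+1) a b &
      forall a b c, t3 (SS k.+1) a b c = R3 k (s k.+1) a b c].
Proof.
move=> Hk; rewrite /R1 /R2 /R3 lam1 //.
change (SS k.+1) with (tmul (SS k) (texp (vec (vv k)))).
rewrite expv; have H0 := Sg0 vv k; rewrite /SS in H0 *.
split => * /=; rewrite H0; field.
Qed.

Lemma Xdot_seg k w : (k < m)%N -> forall x, s k < x < s k.+1 ->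
  Xdot X w x = vv k w / (s k.+1 - s k).
Proof.
move=> Hk x Hx; rewrite /Xdot.
rewrite (Derive_ext_loc _ (fun u => X (s k) w + (u - s k) / (s k.+1 - s k) * vv k w)).
  apply: is_derive_unique; auto_derive => //. have := Dk Hk. move=> ?; field; auto.
apply: (locally_interval _ x (s k) (s k.+1)); try (simpl; lra).
move=> y /= H1 H2; rewrite /vv; apply: Haff => //; lra.
Qed.

Definition I1 a x := RInt (fun t => Xdot X a t) 0 x.
Definition I2 a b x := RInt (fun t => I1 a t * Xdot X b t) 0 x.

Lemma lev1 a : forall k, (k < m)%N -> forall t, s k <= t <= s k.+1 -> is_RInt (fun t => Xdot X a t) 0 t (R1 k t a).
Proof.
apply: (@chain s m Hs0 Hinc _ (fun k t => R1 k t a) (fun k x => vv k a / (s k.+1 - s k))).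
- move=> j Hj x; rewrite /R1 /lam; auto_derive => //; have := Dk Hj; move=> ?; field; auto.
- move=> *; apply: continuous_const.
- move=> j Hj x Hx; exact: Xdot_seg.
- rewrite /R1 /lam Hs0 /=; rewrite /Rdiv; ring.
- move=> j Hj; rewrite /R1 lam0; have [-> _ _] := SSstep (ltnW Hj); rewrite /R1; ring.
Qed.

Lemma lev2 a b : forall k, (k < m)%N -> forall t, s k <= t <= s k.+1 ->
  is_RInt (fun t => I1 a t * Xdot X b t) 0 t (R2 k t a b).
Proof.
apply: (@chain s m Hs0 Hinc _ (fun k t => R2 k t a b) (fun k x => R1 k x a * (vv k b / (s k.+1 - s k)))).
- move=> j Hj x; rewrite /R1 /R2 /lam; auto_derive => //; have := Dk Hj; move=> ?; field; auto.
- move=> j Hj x; apply: ex_derive_continuous; rewrite /R1 /lam; auto_derive => //.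
- move=> j Hj x Hx; rewrite (Xdot_seg b Hj Hx) /I1 (is_RInt_unique _ _ _ _ (@lev1 a j Hj x _)) //; lra.
- rewrite /R2 /lam Hs0 /= /tone /=; rewrite /Rdiv; set h2 := / 2; ring.
- move=> j Hj; rewrite /R2 lam0; have [_ -> _] := SSstep (ltnW Hj); rewrite /R2; rring.
Qed.

Lemma lev3 a b c : forall k, (k < m)%N -> forall t, s k <= t <= s k.+1 ->
  is_RInt (fun t => I2 a b t * Xdot X c t) 0 t (R3 k t a b c).
Proof.
apply: (@chain s m Hs0 Hinc _ (fun k t => R3 k t a b c) (fun k x => R2 k x a b * (vv k c / (s k.+1 - s k)))).
- move=> j Hj x; rewrite /R2 /R3 /lam; auto_derive => //; have := Dk Hj; move=> ?; field; auto.
- move=> j Hj x; apply: ex_derive_continuous; rewrite /R2 /lam; auto_derive => //.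
- move=> j Hj x Hx; rewrite (Xdot_seg c Hj Hx) /I2 (is_RInt_unique _ _ _ _ (@lev2 a b j Hj x _)) //; lra.
- rewrite /R3 /lam Hs0 /= /tone /=; rewrite /Rdiv; set h2 := / 2; set h6 := / 6; ring.
- move=> j Hj; rewrite /R3 lam0; have [_ _ ->] := SSstep (ltnW Hj); rewrite /R3; rring.
Qed.

Lemma sig_SS n : m = n.+1 -> s m = 1 -> sig3 X = SS m.
Proof.
move=> Hm H1.
have Hn : (n < m)%N by rewrite Hm.
have Ht : s n <= s n.+1 <= s n.+1 by have := Hinc Hn; lra.
have [E1 E2 E3] := SSstep Hn.
apply: T3_ext.
- by rewrite Sg0.
- move=> a /=; rewrite Hm E1 -H1 Hm; exact: is_RInt_unique (@lev1 a n Hn _ Ht).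
- move=> a b /=; rewrite Hm E2 -H1 Hm; exact: is_RInt_unique (@lev2 a b n Hn _ Ht).
- move=> a b c /=; rewrite Hm E3 -H1 Hm; exact: is_RInt_unique (@lev3 a b c n Hn _ Ht).
Qed.
End PL.

Lemma Lim0 d g : ~ @Defs.Lim d 0 g.
Proof. move=> [X [[s [H0 [H1 _]]] _]]. rewrite H0 in H1. lra. Qed.

Lemma LimSg d n g : @Defs.Lim d n.+1 g -> exists v, g = Sg v n.+1.
Proof.
move=> [X [[s [H0 [H1 [Hinc Haff]]]] <-]].
exists (vv X s). exact: (sig_SS H0 Hinc Haff (Logic.eq_refl n.+1) H1).
Qed.

Lemma mul1 d (x1 y1 : 'I_d -> R) x2 y2 x3 y3 : tmul (mkT3 1 x1 x2 x3) (mkT3 1 y1 y2 y3) =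
  mkT3 1 (fun a => x1 a + y1 a) (fun a b => x2 a b + x1 a * y1 b + y2 a b)
   (fun a b c => x3 a b c + x2 a b * y1 c + x1 a * y2 b c + y3 a b c).
Proof. apply T3_ext; intros; unfold tmul; cbn [t0 t1 t2 t3]; ring. Qed.

Lemma expz d (z1 : 'I_d -> R) z2 z3 : texp (mkT3 0 z1 z2 z3) = mkT3 1 z1
  (fun a b => z2 a b + z1 a * z1 b / 2)
  (fun a b c => z3 a b c + (z1 a * z2 b c + z2 a b * z1 c) / 2 + z1 a * z1 b * z1 c / 6).
Proof. apply T3_ext; intros; unfold texp, tone, tmul, tadd, tscale; cbn [t0 t1 t2 t3]; field. Qed.

Lemma add0 d (x1 y1 : 'I_d -> R) x2 y2 x3 y3 : tadd (mkT3 0 x1 x2 x3) (mkT3 0 y1 y2 y3) =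
  mkT3 0 (fun a => x1 a + y1 a) (fun a b => x2 a b + y2 a b) (fun a b c => x3 a b c + y3 a b c).
Proof. apply T3_ext; intros; unfold tadd; cbn [t0 t1 t2 t3]; ring. Qed.

Lemma scale0 d r (x1 : 'I_d -> R) x2 x3 : tscale r (mkT3 0 x1 x2 x3) =
  mkT3 0 (fun a => r * x1 a) (fun a b => r * x2 a b) (fun a b c => r * x3 a b c).
Proof. apply T3_ext; intros; unfold tscale; cbn [t0 t1 t2 t3]; ring. Qed.

Lemma br0 d (x1 y1 : 'I_d -> R) x2 y2 x3 y3 : tbracket (mkT3 0 x1 x2 x3) (mkT3 0 y1 y2 y3) =
  mkT3 0 (fun _ => 0) (fun a b => x1 a * y1 b - y1 a * x1 b)
    (fun a b c => x1 a * y2 b c + x2 a b * y1 c - (y1 a * x2 b c + y2 a b * x1 c)).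
Proof. apply T3_ext; intros; unfold tbracket, tsub, tmul, tadd, tscale; cbn [t0 t1 t2 t3]; ring. Qed.

Ltac norm0 := rewrite /vec; repeat rewrite ?br0 ?add0 ?scale0.

Lemma tmulA d (x y z : T3 d) : tmul (tmul x y) z = tmul x (tmul y z).
Proof. apply T3_ext; intros; unfold tmul; cbn [t0 t1 t2 t3]; ring. Qed.
Lemma tmul1l d (x : T3 d) : tmul (tone d) x = x.
Proof. apply T3_ext; intros; unfold tmul, tone; cbn [t0 t1 t2 t3]; ring. Qed.
Lemma tmul1r d (x : T3 d) : tmul x (tone d) = x.
Proof. apply T3_ext; intros; unfold tmul, tone; cbn [t0 t1 t2 t3]; ring. Qed.

Lemma expN d (z : T3 d) : t0 z = 0 -> tmul (texp z) (texp (tscale (-1) z)) = tone d.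
Proof.
case: z => z0 z1 z2 z3 /= ->. rewrite scale0 !expz mul1.
apply T3_ext; intros; unfold tone; cbn [t0 t1 t2 t3]; field.
Qed.

Lemma expvN d (v : 'I_d -> R) : tmul (texp (vec v)) (texp (vec (fun w => - v w))) = tone d.
Proof. rewrite !expv mul1; apply T3_ext; intros; unfold tone; cbn [t0 t1 t2 t3]; field. Qed.

Lemma sqrt_uniq d (V P : T3 d) : t0 V = 1 -> t0 P = 1 -> tmul V V = tmul P P -> V = P.
Proof.
move=> HV HP E.
have E1 a : t1 V a = t1 P a.
  have := f_equal (fun u => t1 u a) E; rewrite /= HV HP; lra.
have E2 a b : t2 V a b = t2 P a b.
  have := f_equal (fun u => t2 u a b) E; rewrite /= HV HP !E1; lra.
have E3 a b c : t3 V a b c = t3 P a b c.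
  have := f_equal (fun u => t3 u a b c) E; rewrite /= HV HP !E1 !E2; lra.
by apply: T3_ext; rewrite ?HV ?HP.
Qed.

Lemma lie0 d (z : T3 d) : in_lie z -> t0 z = 0.
Proof. elim => //= *; try lra; try nra. Qed.

Definition pp d (a b : 'I_d -> R) : 'I_d -> R := fun w => (-3 * a w - b w)/4.
Definition qq d (a b : 'I_d -> R) : 'I_d -> R := fun w => (a w + 3 * b w)/4.
Definition EE d (v : 'I_d -> R) := texp (vec v).
Definition PQ d (a b : 'I_d -> R) := tmul (EE (pp a b)) (EE (qq a b)).

Lemma PP d (a b : 'I_d -> R) : tmul (PQ a b) (PQ a b) = tmul (EE (fun w => - a w)) (EE b).
Proof. rewrite /PQ /EE !expv !mul1 /pp /qq. apply T3_ext; intros; cbn [t0 t1 t2 t3]; field. Qed.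

Definition hh d (a b : T3 d) : T3 d :=
  tadd (tscale (/2) (tadd b (tscale (-1) a)))
   (tadd (tscale (-/4) (tbracket a b))
     (tscale (/24) (tadd (tbracket a (tbracket a b)) (tbracket b (tbracket a b))))).

Lemma Ph d (a b : 'I_d -> R) : PQ a b = texp (hh (vec a) (vec b)).
Proof. rewrite /PQ /EE !expv mul1 /hh; norm0; rewrite expz /pp /qq.
apply T3_ext; intros; cbn [t0 t1 t2 t3]; field. Qed.

Definition zz d (a b : T3 d) : T3 d :=
  tadd (tscale (/2) (tadd a b))
   (tscale (/48) (tbracket (tadd b (tscale (-1) a)) (tbracket a b))).

Lemma Pz d (a b : 'I_d -> R) : tmul (EE a) (PQ a b) = texp (zz (vec a) (vec b)).
Proof. rewrite /PQ /EE !expv !mul1 /zz; norm0; rewrite expz /pp /qq.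
apply T3_ext; intros; cbn [t0 t1 t2 t3]; field. Qed.

Definition X3 d (a p q : 'I_d -> R) (t : R) (w : 'I_d) : R :=
  if Rle_dec t (1/3) then 3 * t * a w
  else if Rle_dec t (2/3) then a w + (3 * t - 1) * p w
  else a w + p w + (3 * t - 2) * q w.

Definition s3 (k : nat) : R :=
  match k with 0%N => 0 | 1%N => 1/3 | 2%N => 2/3 | _ => 1 end.

Lemma path3 d (a p q : 'I_d -> R) :
  Defs.Lim 3 (tmul (EE a) (tmul (EE p) (EE q))).
Proof.
have Hinc : forall k, (k < 3)%N -> s3 k < s3 k.+1.
  by case=> [|[|[|k]]] //= _; lra.
have Haff : forall k, (k < 3)%N -> forall t, s3 k <= t <= s3 k.+1 -> forall w,
    X3 a p q t w = X3 a p q (s3 k) w + (t - s3 k) / (s3 k.+1 - s3 k) * (X3 a p q (s3 k.+1) w - X3 a p q (s3 k) w).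
  case=> [|[|[|k]]] //= _ t Ht w; rewrite /X3;
  repeat (case: Rle_dec => ? /=); try (exfalso; lra);
  first [ field | (have -> : t = 1/3 by lra); field | (have -> : t = 2/3 by lra); field ].
exists (X3 a p q); split.
  by exists s3; split; [|split; [|split]].
rewrite (sig_SS (s := s3) (m := 3) (Logic.eq_refl _) Hinc Haff (Logic.eq_refl 3%N)) //.
change (SS (X3 a p q) s3 3) with (tmul (tmul (tmul (tone d) (texp (vec (vv (X3 a p q) s3 0)))) (texp (vec (vv (X3 a p q) s3 1)))) (texp (vec (vv (X3 a p q) s3 2)))).
have V k w : vv (X3 a p q) s3 k w = X3 a p q (s3 k.+1) w - X3 a p q (s3 k) w by [].
have -> : vv (X3 a p q) s3 0 = a.
  apply: functional_extensionality => w; rewrite V /X3 /=;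
  repeat (case: Rle_dec => ? /=); try (exfalso; lra); field.
have -> : vv (X3 a p q) s3 1 = p.
  apply: functional_extensionality => w; rewrite V /X3 /=;
  repeat (case: Rle_dec => ? /=); try (exfalso; lra); field.
have -> : vv (X3 a p q) s3 2 = q.
  apply: functional_extensionality => w; rewrite V /X3 /=;
  repeat (case: Rle_dec => ? /=); try (exfalso; lra); field.
by rewrite tmul1l !tmulA.
Qed.

Lemma path1 d (a : 'I_d -> R) : Defs.Lim 1 (EE a).
Proof.
pose s := fun k : nat => if k is 0%N then 0 else 1.
have Hinc : forall k, (k < 1)%N -> s k < s k.+1 by case=> //= _; lra.
have Haff : forall k, (k < 1)%N -> forall t, s k <= t <= s k.+1 -> forall w,
    t * a w = s k * a w + (t - s k) / (s k.+1 - s k) * (s k.+1 * a w - s k * a w).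
  case=> //= _ t Ht w; field.
exists (fun t w => t * a w); split.
  by exists s; split; [|split; [|split]].
rewrite (sig_SS (s := s) (m := 1) (Logic.eq_refl _) Hinc Haff (Logic.eq_refl 1%N)) //.
change (SS (fun t w => t * a w) s 1) with (tmul (tone d) (texp (vec (vv (fun t w => t * a w) s 0)))).
have -> : vv (fun t w => t * a w) s 0 = a.
  apply: functional_extensionality => w; rewrite /vv /=; ring.
by rewrite tmul1l.
Qed.

Lemma Lim1E d g : @Defs.Lim d 1 g -> exists a, g = EE a.
Proof.
move/LimSg => [v ->]; exists (v 0%N).
by rewrite /= tmul1l.
Qed.

Lemma upper d : bary_incl d (1%N :: 1%N :: nil) 3.
Proof.
move=> x g HF [_ [zs [HZ Hsum]]].
inversion HF as [|? ? x1 xr L1 HF2]; subst.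
inversion HF2 as [|? ? x2 xr' L2 HF3]; subst.
inversion HF3; subst.
inversion HZ as [|? z1 ? zr [Lz1 Ez1] HZ2]; subst.
inversion HZ2 as [|? z2 ? zr' [Lz2 Ez2] HZ3]; subst.
inversion HZ3; subst.
have [a Ea] := Lim1E L1. have [b Eb] := Lim1E L2.
have H0 := lie0 Lz1.
have Ez : z2 = tscale (-1) z1.
  apply: T3_ext => /=.
  - have := f_equal (@t0 d) Hsum; rewrite /= H0; lra.
  - move=> i; have := f_equal (fun u => t1 u i) Hsum; rewrite /=; lra.
  - move=> i j; have := f_equal (fun u => t2 u i j) Hsum; rewrite /=; lra.
  - move=> i j k; have := f_equal (fun u => t3 u i j k) Hsum; rewrite /=; lra.
have UV := expN H0. rewrite -Ez in UV.
have Hg : g = tmul (EE a) (texp z2).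
  by rewrite -Ea tmulA UV tmul1r.
have HVV : tmul (texp z2) (texp z2) = tmul (PQ a b) (PQ a b).
  rewrite PP -[tmul (texp z2) (texp z2)]tmul1l -(expvN (fun w => - a w)).
  have -> : (fun w => - - a w) = a by apply: functional_extensionality => w; ring.
  by rewrite tmulA -/(EE a) -(tmulA (EE a) (texp z2)) -Hg Eb.
have E2 : texp z2 = PQ a b.
  apply: sqrt_uniq HVV.
  - by rewrite /texp /= (lie0 Lz2); ring.
  - by rewrite /PQ /EE !expv /=; ring.
rewrite Hg E2 /PQ; exact: path3.
Qed.

Section Lower.
Variables (d : nat) (Hd : (2 <= d)%N).
Let i : 'I_d := Ordinal (leq_trans (isT : (1 <= 2)%N) Hd).
Let j : 'I_d := Ordinal Hd.
Let a : 'I_d -> R := fun k => if k == i then 1 else 0.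
Let b : 'I_d -> R := fun k => if k == j then 1 else 0.
Let T := tmul (EE a) (PQ a b).

Lemma Hji : (j == i) = false. Proof. by []. Qed.
Lemma Hij : (i == j) = false. Proof. by []. Qed.

Lemma Tval : [/\ t1 T i = 1/2, t1 T j = 1/2, t2 T i j = 1/8 & t3 T i i j = 0].
Proof.
rewrite /T /PQ /EE !expv !mul1 /= /a /b /pp /qq !eqxx Hij Hji.
split; field.
Qed.

Lemma Tbary : is_bary (EE a :: EE b :: nil) T.
Proof.
have La : in_lie (vec a) := lie_gen i.
have Lb : in_lie (vec b) := lie_gen j.
have Lh : in_lie (hh (vec a) (vec b)) :=
  lie_add (lie_scale _ (lie_add Lb (lie_scale _ La))) (lie_add (lie_scale _ (lie_bracket La Lb)) (lie_scale _ (lie_add (lie_bracket La (lie_bracket La Lb)) (lie_bracket Lb (lie_bracket La Lb))))).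
have Ht0 := lie0 Lh.
split.
  exists (zz (vec a) (vec b)); split; last by rewrite /T Pz.
  exact: (lie_add (lie_scale _ (lie_add La Lb)) (lie_scale _ (lie_bracket (lie_add Lb (lie_scale _ La)) (lie_bracket La Lb)))).
exists (tscale (-1) (hh (vec a) (vec b)) :: hh (vec a) (vec b) :: nil); split.
  constructor; [split; first by constructor|constructor; [split => //|constructor]].
  - by rewrite /T Ph tmulA expN // tmul1r.
  - rewrite /T tmulA -Ph PP -tmulA.
    have := expvN a; rewrite /EE => ->. by rewrite tmul1l.
rewrite /tsum /=; apply: T3_ext => /= *; ring.
Qed.

Lemma lower m : (m < 3)%N -> ~ bary_incl d (1%N :: 1%N :: nil) m.
Proof.
move=> Hm H.
have HL : Defs.Lim m T.
  apply: (H (EE a :: EE b :: nil)) => //; last exact: Tbary.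
  by constructor; [exact: path1|constructor; [exact: path1|constructor]].
have [e1 e2 e3 e4] := Tval. clear H.
case: m Hm HL => [|[|[|m]]] // _.
- exact: Lim0.
- move/Lim1E => [u Eu]; rewrite Eu /EE expv /= in e1 e2 e3 e4.
  rewrite e1 e2 in e4. lra.
- move/LimSg => [v Ev].
  have Ev2 : Sg v 2 = tmul (EE (v 0%N)) (EE (v 1%N)) by rewrite /= tmul1l.
  rewrite Ev Ev2 /EE !expv mul1 /= in e1 e2 e3 e4.
  have E1 : v 1%N i = /2 - v 0%N i by lra.
  have E2 : v 1%N j = /2 - v 0%N j by lra.
  rewrite E1 E2 in e3 e4.
  have E3 : v 0%N j = v 0%N i by nra.
  rewrite E3 in e4. nra.
Qed.
End Lower.

Unset Implicit Arguments.
Theorem lemma8p5 (d : nat) : (2 <= d)%N -> B_eq d (1%N :: 1%N :: nil) 3.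
Proof.
move=> Hd; split; first exact: upper.
move=> m Hm; exact: lower.
Qed.
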